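(* Let $n\ge 4$, $N=\{1,\dots,n\}$, fix distinct $i_1,i_2\in N$ and let $\hat N^c=N\setminus\{i_1,i_2\}$. Then the inequality $$x_{i_1i_2}+\sum_{j\in\hat N^c}\left(x_{i_1j}+x_{ji_1}\right)-\sum_{j\in\hat N^c}x_{ji_2}-\sum_{j,j'\in\hat N^c:\,j\ne j'} x_{jj'}\le 2-\frac{(n-3)(n-4)}{2}$$ is a valid inequality for the weak order polytope $P^n_{WO}$, i.e. it holds for every point $x\in P^n_{WO}$.
   Context: Let $N=\{1,\dots,n\}$ and $A_N=\{(i,j): i,j\in N, i\ne j\}$. A weak order on $N$ is a binary relation $W\subseteq N\times N$ that is reflexive, transitive and total; $(i,j)\in W$ is read ''$i$ is preferred over or tied with $j$''. The characteristic vector of $W$ is $x^W\in\{0,1\}^{A_N}$ with $x^W_{(i,j)}=1$ if $(i,j)\in W$ and $0$ otherwise. The weak order polytope $P^n_{WO}$ is the convex hull of the characteristic vectors of all weak orders on $N$; its points are vectors $x\in\mathbb{R}^{A_N}$ and $x_{ij}$ denotes the coordinate $x_{(i,j)}$. *)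

(* Defs.v *)
From mathcomp Require Import all_boot all_order all_algebra.
Set Implicit Arguments. Unset Strict Implicit. Unset Printing Implicit Defensive.
Import Order.TTheory GRing.Theory Num.Theory.
Local Open Scope ring_scope.

(* N = {1..n} is represented by 'I_n. A binary relation is a [rel 'I_n];
   W i j = true means "i is preferred over or tied with j". *)
Definition weak_order (n : nat) (W : rel 'I_n) : Prop :=
  reflexive W /\ transitive W /\ total W.

(* Points of R^{A_N} are represented as functions x : 'I_n -> 'I_n -> R;
   only the off-diagonal coordinates x i j (i != j) are meaningful. *)

Definition in_weak_order_polytope (R : realFieldType) (n : nat)
    (x : 'I_n -> 'I_n -> R) : Prop :=
  exists (m : nat) (W : 'I_m -> rel 'I_n) (lam : 'I_m -> R),
    [/\ forall k, weak_order (W k),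
        forall k, 0 <= lam k,
        \sum_(k < m) lam k = 1 &
        forall i j : 'I_n, i != j ->
          x i j = \sum_(k < m) lam k * (W k i j)%:R].

(* Main.v *)
Require Import Defs.
From mathcomp Require Import all_boot all_order all_algebra.
From mathcomp Require Import lra zify.
Import Order.TTheory GRing.Theory Num.Theory.
Local Open Scope ring_scope.

Section Aux.
Variable R : realFieldType.
Variable n : nat.

Lemma sum_ind (P Q : pred 'I_n) :
  \sum_(j | P j) ((Q j : nat)%:R : R) = (#|[pred j | P j && Q j]|)%:R.
Proof.
rewrite -natr_sum; congr (_ %:R).
rewrite -sum1_card big_mkcondr /=; apply: eq_bigr => j _; by case: (Q j).
Qed.

Lemma sum_one (P : pred 'I_n) : \sum_(j | P j) (1 : R) = (#|P|)%:R.
Proof.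
rewrite (eq_bigr (fun j => ((true : nat)%:R : R))) // sum_ind.
by congr (_ %:R); apply: eq_card => j; rewrite !inE andbT.
Qed.

Lemma card_minus (P : pred 'I_n) (j : 'I_n) : P j ->
  #|P| = (#|[pred j' | P j' && (j' != j)]|).+1.
Proof.
move=> Pj; rewrite (cardD1 j) unfold_in Pj add1n; congr (_ .+1).
by apply: eq_card => k; rewrite !unfold_in /= andbC.
Qed.

Lemma sum_swap (P : pred 'I_n) (F : 'I_n -> 'I_n -> R) :
  \sum_(j | P j) \sum_(j' | P j' && (j' != j)) F j j' =
  \sum_(j | P j) \sum_(j' | P j' && (j' != j)) F j' j.
Proof.
rewrite (exchange_big_dep P) /=; last by move=> i j _ /andP[].
apply: eq_bigr => j Pj; apply: eq_bigl => k.
by rewrite Pj /= eq_sym.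
Qed.

End Aux.

Lemma bool_pair (R : realFieldType) (b1 b2 c : bool) :
  (b1 || b2) -> (c -> b1 && b2) ->
  1 + (c : nat)%:R <= (b1 : nat)%:R + (b2 : nat)%:R :> R.
Proof.
move=> H1; case: c => [/(_ isT)/andP[-> ->] /=|_ /=]; first lra.
by case: b1 H1; case: b2 => //= _; lra.
Qed.

Lemma bool_le (R : realFieldType) (b1 b2 : bool) :
  (b1 : nat)%:R + (b2 : nat)%:R <= 1 + ((b1 && b2) : nat)%:R :> R.
Proof. by case: b1; case: b2 => /=; lra. Qed.

Lemma bool_imp (R : realFieldType) (b1 b2 : bool) :
  (b1 -> b2) -> (b1 : nat)%:R <= (b2 : nat)%:R :> R.
Proof.
case: b1 => [/(_ isT) -> /=|_ /=]; first lra.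
by case: b2 => /=; lra.
Qed.

Section Comb.
Variable R : realFieldType.
Variable n : nat.
Variable W : rel 'I_n.
Hypothesis trW : transitive W.
Hypothesis toW : total W.
Variables a b : 'I_n.
Variable P : pred 'I_n.

Let tie j := W a j && W j a.
Let T := [pred j | P j && tie j].
Let mR : R := (#|P|)%:R.
Let tR : R := (#|T|)%:R.

Lemma E1 : \sum_(j | P j) ((W a j : nat)%:R + (W j a : nat)%:R) <= mR + tR.
Proof.
apply: le_trans (_ : \sum_(j | P j) (1 + (tie j : nat)%:R) <= _).
  by apply: ler_sum => j _; apply: bool_le.
by rewrite big_split /= sum_one sum_ind.
Qed.

Lemma E2 : W a b -> tR <= \sum_(j | P j) (W j b : nat)%:R.
Proof.
move=> Wab; rewrite /tR -sum_ind; apply: ler_sum => j _; apply: bool_imp.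
by case/andP=> _ Wja; apply: (trW _ _ _ Wja Wab).
Qed.

Lemma inner_card j : P j ->
  (#|[pred j' | P j' && (j' != j)]|)%:R = mR - 1 :> R.
Proof. by move=> Pj; rewrite /mR (@card_minus _ _ _ Pj) -addn1 natrD; lra. Qed.

Lemma inner_tie j : P j ->
  (#|[pred j' | (P j' && (j' != j)) && (tie j && tie j')]|)%:R
   = (tie j : nat)%:R * (tR - 1) :> R.
Proof.
move=> Pj; case Tj: (tie j) => /=.
  have Tj' : T j by rewrite /T /= Pj Tj.
  rewrite (@eq_card _ _ [pred j' | T j' && (j' != j)]); last first.
    by move=> k; rewrite !unfold_in /= -!andbA; case: (k != j); rewrite /= ?andbT ?andbF.
  rewrite /tR (_ : #|T| = (#|[pred j' | T j' & j' != j]|).+1); last first.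
    exact: (@card_minus _ _ _ Tj').
  rewrite -addn1 natrD; lra.
rewrite mul0r eq_card0 //.
by move=> k; rewrite !unfold_in /= andbF.
Qed.

Lemma E3 : mR * (mR - 1) + tR * (tR - 1) <=
  2 * \sum_(j | P j) \sum_(j' | P j' && (j' != j)) (W j j' : nat)%:R.
Proof.
rewrite mulr2n mulrDl mul1r {2}sum_swap -big_split /=.
apply: le_trans (_ : \sum_(j | P j) \sum_(j' | P j' && (j' != j))
    (1 + ((tie j && tie j') : nat)%:R) <= _).
  rewrite (eq_bigr (fun j => (mR - 1) + (tie j : nat)%:R * (tR - 1))).
    rewrite big_split /= -!mulr_suml (eq_bigr (fun _ => (mR - 1) * 1)); last by move=> *; rewrite mulr1.
    rewrite -mulr_sumr sum_one sum_ind -/mR; lra.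
  move=> j Pj; rewrite big_split /= sum_one sum_ind inner_card //.
  by rewrite inner_tie.
apply: ler_sum => j Pj; rewrite -big_split /=; apply: ler_sum => k /andP[Pk kj].
apply: bool_pair; first exact: toW.
by case/andP=> /andP[Waj Wja] /andP[Wak Wka]; rewrite (trW _ _ _ Wja Wak) (trW _ _ _ Wka Waj).
Qed.

Lemma comb :
  (W a b : nat)%:R + \sum_(j | P j) ((W a j : nat)%:R + (W j a : nat)%:R)
  - \sum_(j | P j) (W j b : nat)%:R
  - \sum_(j | P j) \sum_(j' | P j' && (j' != j)) (W j j' : nat)%:R
  <= 2 - (mR - 1) * (mR - 2) / 2.
Proof.
have e1 := E1; have e3 := E3.
have e0 : 0 <= \sum_(j | P j) (W j b : nat)%:R :> R.
  by apply: sumr_ge0 => j _; apply: ler0n.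
have [h1 h2] : 0 <= (tR - 1) * (tR - 2) /\ 0 <= tR * (tR - 1).
  rewrite /tR; case: #|T| => [|[|k]] /=; try (split; lra).
  rewrite -addn2 natrD; have := ler0n R k; split; nra.
case Wab: (W a b).
  have e2 := E2 Wab; rewrite /=; nra.
rewrite /=; nra.
Qed.

End Comb.

Definition Lf {R : realFieldType} {n} (i1 i2 : 'I_n) (y : 'I_n -> 'I_n -> R) : R :=
  y i1 i2
  + \sum_(j : 'I_n | j \notin [set i1; i2]) (y i1 j + y j i1)
  - \sum_(j : 'I_n | j \notin [set i1; i2]) y j i2
  - \sum_(j : 'I_n | j \notin [set i1; i2])
      \sum_(j' : 'I_n | (j' \notin [set i1; i2]) && (j' != j)) y j j'.

Lemma Lf_lin (R : realFieldType) n (i1 i2 : 'I_n) m (c : 'I_m -> R)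
   (y : 'I_m -> 'I_n -> 'I_n -> R) :
  Lf i1 i2 (fun i j => \sum_(k < m) c k * y k i j) =
  \sum_(k < m) c k * Lf i1 i2 (y k).
Proof.
rewrite /Lf.
under [RHS]eq_bigr => k _ do rewrite !mulrBr !mulrDr !mulr_sumr.
rewrite !sumrB big_split /=.
rewrite [in RHS]big_split /=.
congr (_ + _ - _ - _).
- rewrite [X in X + _ = _]exchange_big [X in _ + X = _]exchange_big -big_split /=.
  apply: eq_bigr => k _; rewrite -big_split /=.
  by apply: eq_bigr => j _; rewrite mulrDr.
- by rewrite exchange_big.
- rewrite exchange_big; apply: eq_bigr => j _.
  by rewrite exchange_big; apply: eq_bigr => k _; rewrite mulr_sumr.
Qed.

Lemma Lf_ext (R : realFieldType) n (i1 i2 : 'I_n) (y z : 'I_n -> 'I_n -> R) :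
  i1 != i2 -> (forall i j, i != j -> y i j = z i j) -> Lf i1 i2 y = Lf i1 i2 z.
Proof.
move=> h12 H; rewrite /Lf.
have nin j : j \notin [set i1; i2] -> (j != i1) && (j != i2).
  by rewrite !inE negb_or.
congr (_ + _ - _ - _).
- exact: H.
- apply: eq_bigr => j /nin /andP[j1 j2].
  by rewrite H 1?eq_sym // H.
- by apply: eq_bigr => j /nin /andP[j1 j2]; rewrite H.
- apply: eq_bigr => j _; apply: eq_bigr => k /andP[_ kj].
  by rewrite H // eq_sym.
Qed.

Theorem mainTheorem3 (R : realFieldType) (n : nat) (i1 i2 : 'I_n)
    (x : 'I_n -> 'I_n -> R) :
  (4 <= n)%N -> i1 != i2 -> in_weak_order_polytope x ->
  x i1 i2
  + \sum_(j : 'I_n | j \notin [set i1; i2]) (x i1 j + x j i1)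
  - \sum_(j : 'I_n | j \notin [set i1; i2]) x j i2
  - \sum_(j : 'I_n | j \notin [set i1; i2])
      \sum_(j' : 'I_n | (j' \notin [set i1; i2]) && (j' != j)) x j j'
  <= 2 - ((n - 3) * (n - 4))%:R / 2.
Proof.
move=> n4 h12 [m [W [lam [HW Hl Hs Hx]]]].
change (Lf i1 i2 x <= 2 - ((n - 3) * (n - 4))%:R / 2).
rewrite (@Lf_ext _ _ _ _ x _ h12 Hx) Lf_lin.
set rhs := 2 - _.
apply: le_trans (_ : \sum_(k < m) lam k * rhs <= _); last first.
  by rewrite -mulr_suml Hs mul1r.
apply: ler_sum => k _; apply: ler_wpM2l => //.
case: (HW k) => _ [tr to].
have := @comb R n (W k) tr to i1 i2 (fun j => j \notin [set i1; i2]).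
have hc : (#|[set i1; i2]| + #|~: [set i1; i2]|)%N = n by rewrite cardsC card_ord.
rewrite cards2 h12 in hc.
move=> H; apply: le_trans H _.
have -> : #|(fun j : 'I_n => j \notin [set i1; i2])| = #|~: [set i1; i2]|.
  by apply: eq_card => j; rewrite in_setC.
rewrite /rhs; move: (#|~: _|) hc => c hc.
have -> : c = (n - 2)%N by move: hc => /= hc; lia.
move: n4; clear; case: n => [|[|[|[|k]]]] // _.
have -> : (k.+4 - 2)%N = (k.+2)%N by lia.
have -> : ((k.+4 - 3) * (k.+4 - 4))%N = (k.+1 * k)%N by lia.
rewrite natrM -addn2 -addn1 !natrD; lra.
Qed.
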